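(* Suppose Assumption 1 holds, $f$ is convex, $F$ is $\mu$-optimal-set-strongly convex for some $\mu>0$, every $d^k$ computed in Algorithm 2 satisfies the $\eta$-inexactness condition for a fixed $\eta\in[0,1)$, and for all $k$ the initial matrices satisfy $m_0I\preceq H^0_k\preceq M_0I$ with $M_0>0$, $m_0\le M_0$ (and $m_0>0$ for Variant 1). Then for all $k=0,1,2,\dots$, with $H_k$ the final (accepted) matrix, $$\frac{F(x^{k+1})-F^*}{F(x^k)-F^*}\le1-\gamma\frac{\mu(1-\eta)}{\mu+\|H_k\|},$$ and the right-hand side is at most $1-\gamma\frac{\mu(1-\eta)}{\mu+\tilde M_1(\eta)}$ for Variant 1 and at most $1-\gamma\frac{\mu(1-\eta)}{\mu+\tilde M_2(\eta)}$ for Variant 2. Moreover, for every $k$ with $F(x^k)-F^*\ge(x^k-P_\Omega(x^k))^TH_k(x^k-P_\Omega(x^k))$ (and the final $H_k\succeq0$), one has $\frac{F(x^{k+1})-F^*}{F(x^k)-F^*}\le1-\frac{(1-\eta)\gamma}{2}$.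
   Context: Problem setting: $F(x)=f(x)+\psi(x)$ on $\mathbb{R}^n$, $F^*=\inf F$, $\Omega=\{x:F(x)=F^*\}$, $P_\Omega$ the Euclidean projection onto $\Omega$, $\|\cdot\|$ the Euclidean / spectral norm. Assumption 1: $f$ is differentiable with $L$-Lipschitz continuous gradient ($L>0$); $\psi:\mathbb{R}^n\to\mathbb{R}\cup\{+\infty\}$ is convex, proper and closed; $F$ is bounded below; $\Omega$ is nonempty. $F$ is $\mu$-optimal-set-strongly convex ($\mu\ge0$) if for all $x$ and all $\lambda\in[0,1]$: $F(\lambda x+(1-\lambda)P_\Omega(x))\le\lambda F(x)+(1-\lambda)F^*-\frac{\mu\lambda(1-\lambda)}2\|x-P_\Omega(x)\|^2$. For $x\in\mathbb{R}^n$ and symmetric $H$, $Q^x_H(d)\coloneqq\nabla f(x)^Td+\frac12d^THd+\psi(x+d)-\psi(x)$, $Q^*=\inf_dQ^x_H(d)$; $d$ satisfies the $\eta$-inexactness condition if $Q^x_H(d)\le(1-\eta)Q^*$. Algorithm 2: given $\beta\in(0,1)$, $\gamma\in(0,1]$, $x^0$, fixed $\eta\in[0,1)$; for each $k$: choose symmetric $H^0_k$ (in Variant 1, $H^0_k\succ0$); set $\alpha_k\leftarrow1$, $H_k\leftarrow H^0_k$, compute $d^k$ satisfying the $\eta$-inexactness condition for $Q^{x^k}_{H_k}$; while $F(x^k)-F(x^k+d^k)\ge-\gamma Q^{x^k}_{H_k}(d^k)\ge0$ fails: Variant 1 sets $\alpha_k\leftarrow\beta\alpha_k$, $H_k\leftarrow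 H^0_k/\alpha_k$; Variant 2 sets $H_k\leftarrow H^0_k+\alpha_k^{-1}I$, then $\alpha_k\leftarrow\beta\alpha_k$; then $d^k$ is recomputed satisfying the $\eta$-inexactness condition. Finally $x^{k+1}=x^k+d^k$; ''final $H_k$'' is the accepted matrix. Constants: $\tilde M_2(\eta)\coloneqq M_0+\max\{1,\frac1\beta(\frac{L(1+\sqrt\eta)}{2-\gamma(1-\sqrt\eta)}-m_0)\}$, $\tilde M_1(\eta)\coloneqq M_0\max\{1,\frac{L(1+\sqrt\eta)}{\beta(2-\gamma(1-\sqrt\eta))m_0}\}$. *)

(* Defs.v *)
From Stdlib Require Import Reals ClassicalEpsilon.
From mathcomp Require Import ssreflect ssrfun ssrbool eqtype ssrnat fintype bigop.
Open Scope R_scope.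

Definition vec (n : nat) := 'I_n -> R.
Definition mat (n : nat) := 'I_n -> 'I_n -> R.

Definition vadd {n} (u v : vec n) : vec n := fun i => u i + v i.
Definition vsub {n} (u v : vec n) : vec n := fun i => u i - v i.
Definition vscale {n} (a : R) (u : vec n) : vec n := fun i => a * u i.

Definition dot {n} (u v : vec n) : R := \big[Rplus/0]_(i < n) (u i * v i).
Definition vnorm {n} (u : vec n) : R := sqrt (dot u u).

Definition mv {n} (H : mat n) (v : vec n) : vec n :=
  fun i => \big[Rplus/0]_(j < n) (H i j * v j).
Definition quad {n} (H : mat n) (v : vec n) : R := dot v (mv H v).
Definition msym {n} (H : mat n) : Prop := forall i j, H i j = H j i.
Definition idmat (n : nat) : mat n := fun i j => if i == j then 1 else 0.
Definition madd {n} (A B : mat n) : mat n := fun i j => A i j + B i j.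
Definition mscale {n} (a : R) (A : mat n) : mat n := fun i j => a * A i j.

Definition loewner_le {n} (A B : mat n) : Prop :=
  forall v, quad A v <= quad B v.
Definition psd {n} (H : mat n) : Prop := forall v, 0 <= quad H v.
Definition pd {n} (H : mat n) : Prop := forall v, v <> (fun _ => 0) -> 0 < quad H v.

Definition opnorm {n} (H : mat n) : R :=
  epsilon (inhabits 0)
    (fun r => is_lub (fun y => exists v : vec n, vnorm v <= 1 /\ y = vnorm (mv H v)) r).

Definition is_inf (S : R -> Prop) (q : R) : Prop :=
  (forall y, S y -> q <= y) /\ (forall b, (forall y, S y -> b <= y) -> b <= q).

Definition has_gradient {n} (f : vec n -> R) (g : vec n -> vec n) : Prop :=
  forall x eps, 0 < eps -> exists delta, 0 < delta /\
    forall h, 0 < vnorm h < delta ->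
      Rabs (f (vadd x h) - f x - dot (g x) h) <= eps * vnorm h.

Definition lipschitz {n} (L : R) (g : vec n -> vec n) : Prop :=
  forall x y, vnorm (vsub (g x) (g y)) <= L * vnorm (vsub x y).

Definition convex_fun {n} (f : vec n -> R) : Prop :=
  forall x y lam, 0 <= lam <= 1 ->
    f (vadd (vscale lam x) (vscale (1 - lam) y)) <= lam * f x + (1 - lam) * f y.

(* An extended-real-valued psi : R^n -> R U {+oo} is represented by its
   effective domain dom and its (finite) values psi on dom; psi = +oo off dom. *)
Definition convex_ext {n} (dom : vec n -> Prop) (psi : vec n -> R) : Prop :=
  forall x y lam, dom x -> dom y -> 0 <= lam <= 1 ->
    let z := vadd (vscale lam x) (vscale (1 - lam) y) in
    dom z /\ psi z <= lam * psi x + (1 - lam) * psi y.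
Definition proper_ext {n} (dom : vec n -> Prop) : Prop := exists x, dom x.
(* closed = lower semicontinuous as an extended-real-valued function *)
Definition closed_ext {n} (dom : vec n -> Prop) (psi : vec n -> R) : Prop :=
  forall x t, (dom x -> t < psi x) ->
    exists delta, 0 < delta /\
      forall y, vnorm (vsub y x) < delta -> dom y -> t < psi y.

(* Q^x_H(d) (meaningful when x, x+d are in dom psi) *)
Definition Qmodel {n} (g : vec n -> vec n) (psi : vec n -> R)
    (x : vec n) (H : mat n) (d : vec n) : R :=
  dot (g x) d + / 2 * quad H d + psi (vadd x d) - psi x.

(* eta-inexactness: Q(d) <= (1 - eta) Q^*, Q^* = inf_d Q^x_H(d) (Q = +oo off dom) *)
Definition eta_inexact {n} (dom : vec n -> Prop) (g : vec n -> vec n)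
    (psi : vec n -> R) (eta : R) (x : vec n) (H : mat n) (d : vec n) : Prop :=
  dom (vadd x d) /\
  exists Qs, is_inf (fun y => exists d', dom (vadd x d') /\ y = Qmodel g psi x H d') Qs
          /\ Qmodel g psi x H d <= (1 - eta) * Qs.

Definition accepted {n} (f : vec n -> R) (g : vec n -> vec n) (psi : vec n -> R)
    (gamma : R) (x : vec n) (H : mat n) (d : vec n) : Prop :=
  (f x + psi x) - (f (vadd x d) + psi (vadd x d)) >= - gamma * Qmodel g psi x H d
  /\ - gamma * Qmodel g psi x H d >= 0.

Inductive variant := Variant1 | Variant2.

(* matrix used at the i-th trial (i = number of failed tests so far) *)
Definition trial_mat {n} (v : variant) (beta : R) (H0 : mat n) (i : nat) : mat n :=
  match v with
  | Variant1 => mscale (/ (beta ^ i)) H0                      (* H0 / alpha, alpha = beta^i *)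
  | Variant2 => match i with
                | O => H0
                | S i' => madd H0 (mscale (/ (beta ^ i')) (idmat n)) (* H0 + alpha^{-1} I *)
                end
  end.

Definition Mtilde2 (M0 m0 L beta gamma eta : R) : R :=
  M0 + Rmax 1 (/ beta * (L * (1 + sqrt eta) / (2 - gamma * (1 - sqrt eta)) - m0)).
Definition Mtilde1 (M0 m0 L beta gamma eta : R) : R :=
  M0 * Rmax 1 (L * (1 + sqrt eta) / (beta * (2 - gamma * (1 - sqrt eta)) * m0)).

(* Main.v *)
Require Import Defs.
From HB Require Import structures.
From Stdlib Require Import Reals ClassicalEpsilon Lra Psatz FunctionalExtensionality.
From mathcomp Require Import ssreflect ssrfun ssrbool eqtype ssrnat fintype bigop.
Open Scope R_scope.
Set Warnings "-notation-overridden -redundant-canonical-projection".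
Set Implicit Arguments.

HB.instance Definition _ := Monoid.isComLaw.Build R 0 Rplus (fun a b c => esym (Rplus_assoc a b c)) Rplus_comm Rplus_0_l.

Notation S_ n F := (\big[Rplus/0]_(i < n) F i).

Lemma sum_add n (F G : 'I_n -> R) : \big[Rplus/0]_(i<n) (F i + G i) = \big[Rplus/0]_(i<n) F i + \big[Rplus/0]_(i<n) G i.
Proof. by rewrite big_split. Qed.

Lemma sum_scale n c (F : 'I_n -> R) : \big[Rplus/0]_(i<n) (c * F i) = c * \big[Rplus/0]_(i<n) F i.
Proof.
apply: (big_ind2 (fun x y => x = c * y)); first by ring.
- move=> a b a' b' -> ->; ring.
- by [].
Qed.

Lemma sum_le n (F G : 'I_n -> R) : (forall i, F i <= G i) -> \big[Rplus/0]_(i<n) F i <= \big[Rplus/0]_(i<n) G i.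
Proof.
move=> H; apply: (big_ind2 (fun x y => x <= y)); first lra.
- move=> a b a' b' h1 h2; lra.
- by move=> i _; apply: H.
Qed.

Lemma sum_ge0 n (F : 'I_n -> R) : (forall i, 0 <= F i) -> 0 <= \big[Rplus/0]_(i<n) F i.
Proof.
move=> H; apply: (big_ind (fun x => 0 <= x)); first lra.
- move=> a b h1 h2; lra.
- by move=> i _; apply: H.
Qed.

Lemma sum_ext n (F G : 'I_n -> R) : (forall i, F i = G i) -> \big[Rplus/0]_(i<n) F i = \big[Rplus/0]_(i<n) G i.
Proof. by move=> H; apply: eq_bigr => i _. Qed.

Lemma sum_term_le n (F : 'I_n -> R) i : (forall j, 0 <= F j) -> F i <= \big[Rplus/0]_(j<n) F j.
Proof.
move=> H; rewrite (bigD1 i) //=.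
rewrite -[X in X <= _]Rplus_0_r; apply: Rplus_le_compat_l.
apply: (big_ind (fun x => 0 <= x)); first lra.
- move=> a b h1 h2; lra.
- by move=> j _; apply: H.
Qed.

Lemma sum_kron n (v : 'I_n -> R) i : \big[Rplus/0]_(j<n) ((if i == j then 1 else 0) * v j) = v i.
Proof.
rewrite (bigD1 i) //= eqxx big1; first ring.
by move=> j /negbTE; rewrite eq_sym => ->; ring.
Qed.

Lemma dot_comm n (u v : vec n) : dot u v = dot v u.
Proof. rewrite /dot; apply: sum_ext => i; ring. Qed.
Lemma dot_addl n (u v w : vec n) : dot (vadd u v) w = dot u w + dot v w.
Proof. rewrite /dot -sum_add; apply: sum_ext => i; rewrite /vadd; ring. Qed.
Lemma dot_subl n (u v w : vec n) : dot (vsub u v) w = dot u w - dot v w.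
Proof.
rewrite /dot.
have -> : \big[Rplus/0]_(i<n) (vsub u v i * w i) = \big[Rplus/0]_(i<n) (u i * w i + (-1) * (v i * w i)).
  by apply: sum_ext => i; rewrite /vsub; ring.
rewrite sum_add sum_scale; ring.
Qed.
Lemma dot_scalel n c (u w : vec n) : dot (vscale c u) w = c * dot u w.
Proof. rewrite /dot -sum_scale; apply: sum_ext => i; rewrite /vscale; ring. Qed.
Lemma dot_addr n (u v w : vec n) : dot w (vadd u v) = dot w u + dot w v.
Proof. by rewrite dot_comm dot_addl !(dot_comm w). Qed.
Lemma dot_subr n (u v w : vec n) : dot w (vsub u v) = dot w u - dot w v.
Proof. by rewrite dot_comm dot_subl !(dot_comm w). Qed.
Lemma dot_scaler n c (u w : vec n) : dot w (vscale c u) = c * dot w u.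
Proof. by rewrite dot_comm dot_scalel dot_comm. Qed.
Lemma dot_ge0 n (u : vec n) : 0 <= dot u u.
Proof. apply: sum_ge0 => i; nra. Qed.
Lemma dot_eq0 n (u : vec n) : dot u u = 0 -> u = (fun _ => 0).
Proof.
move=> H; apply: functional_extensionality => i.
have := sum_term_le (fun j => u j * u j) i (fun j => ltac:(nra)).
rewrite -/(dot u u) H => h; nra.
Qed.
Lemma dot0r n (u : vec n) : dot u (fun _ => 0) = 0.
Proof. rewrite /dot big1 // => i _; ring. Qed.

Lemma vnorm_sq n (u : vec n) : vnorm u * vnorm u = dot u u.
Proof. rewrite /vnorm sqrt_sqrt //; apply: dot_ge0. Qed.
Lemma vnorm_ge0 n (u : vec n) : 0 <= vnorm u.
Proof. apply: sqrt_pos. Qed.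
Lemma vnorm_scale n c (u : vec n) : vnorm (vscale c u) = Rabs c * vnorm u.
Proof.
rewrite /vnorm dot_scalel dot_scaler -Rmult_assoc sqrt_mult.
- by rewrite -sqrt_Rsqr_abs.
- nra.
- apply: dot_ge0.
Qed.

Lemma CS n (u v : vec n) : dot u v <= vnorm u * vnorm v.
Proof.
have key : forall t, 0 <= dot u u - 2 * t * dot u v + t * t * dot v v.
  move=> t; have := dot_ge0 (vsub u (vscale t v)).
  rewrite !dot_subl !dot_subr !dot_scalel !dot_scaler (dot_comm v u). lra.
have sq : dot u v * dot u v <= dot u u * dot v v.
  have hv := dot_ge0 v; have hu := dot_ge0 u.
  case: (Req_dec (dot v v) 0) => h0.
  - have := key ((dot u u + 1) / (2 * dot u v)).
    case: (Req_dec (dot u v) 0) => h1; first by rewrite h1 h0; lra.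
    have e : 2 * ((dot u u + 1) / (2 * dot u v)) * dot u v = dot u u + 1 by field.
    rewrite e h0 => h. lra.
  - have := key (dot u v / dot v v).
    have -> : dot u u - 2 * (dot u v / dot v v) * dot u v + dot u v / dot v v * (dot u v / dot v v) * dot v v
            = dot u u - dot u v * dot u v / dot v v by field.
    move=> h.
    have hp : 0 < dot v v by lra.
    have : dot u v * dot u v / dot v v <= dot u u by lra.
    move=> h2.
    have e : dot u v * dot u v = (dot u v * dot u v / dot v v) * dot v v by field; lra.
    rewrite e; apply: Rmult_le_compat_r; lra.
have hn : 0 <= vnorm u * vnorm v by apply: Rmult_le_pos; apply: vnorm_ge0.
case: (Rle_dec (dot u v) 0) => h; first lra.
apply: Rsqr_incr_0_var; last done.
rewrite /Rsqr. have := vnorm_sq u; have := vnorm_sq v. nra.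
Qed.

Lemma mv_scale n (H : mat n) c v : mv H (vscale c v) = vscale c (mv H v).
Proof.
apply: functional_extensionality => i; rewrite /mv /vscale -sum_scale.
apply: sum_ext => j; ring.
Qed.
Lemma mv_add n (H : mat n) u v : mv H (vadd u v) = vadd (mv H u) (mv H v).
Proof.
apply: functional_extensionality => i; rewrite /mv /vadd -sum_add.
apply: sum_ext => j; ring.
Qed.
Lemma mv_sub n (H : mat n) u v : mv H (vsub u v) = vsub (mv H u) (mv H v).
Proof.
apply: functional_extensionality => i; rewrite /mv /vsub.
have -> : \big[Rplus/0]_(j<n) (H i j * (u j - v j)) = \big[Rplus/0]_(j<n) (H i j * u j + (-1) * (H i j * v j)).
  by apply: sum_ext => j; ring.
rewrite sum_add sum_scale; ring.
Qed.
Lemma quad_scale n (H : mat n) c v : quad H (vscale c v) = c * c * quad H v.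
Proof. by rewrite /quad mv_scale dot_scalel dot_scaler; ring. Qed.

Lemma sym_dot n (H : mat n) u v : msym H -> dot u (mv H v) = dot v (mv H u).
Proof.
move=> Hs; rewrite /dot /mv.
have -> : \big[Rplus/0]_(i<n) (u i * \big[Rplus/0]_(j<n) (H i j * v j))
   = \big[Rplus/0]_(i<n) \big[Rplus/0]_(j<n) (u i * H i j * v j).
  apply: sum_ext => i; rewrite -sum_scale; apply: sum_ext => j; ring.
have -> : \big[Rplus/0]_(i<n) (v i * \big[Rplus/0]_(j<n) (H i j * u j))
   = \big[Rplus/0]_(i<n) \big[Rplus/0]_(j<n) (u j * H j i * v i).
  apply: sum_ext => i; rewrite -sum_scale; apply: sum_ext => j; rewrite (Hs i j); ring.
by rewrite exchange_big.
Qed.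

Lemma quad_mscale n c (H : mat n) v : quad (mscale c H) v = c * quad H v.
Proof.
rewrite /quad -dot_scaler; congr dot; apply: functional_extensionality => i.
rewrite /mv /vscale /mscale -sum_scale; apply: sum_ext => j; ring.
Qed.
Lemma quad_madd n (A B : mat n) v : quad (madd A B) v = quad A v + quad B v.
Proof.
rewrite /quad -dot_addr; congr dot; apply: functional_extensionality => i.
rewrite /mv /vadd /madd -sum_add; apply: sum_ext => j; ring.
Qed.
Lemma quad_id n (v : vec n) : quad (idmat n) v = dot v v.
Proof.
rewrite /quad; congr dot; apply: functional_extensionality => i.
by rewrite /mv /idmat sum_kron.
Qed.
Lemma msym_mscale n c (H : mat n) : msym H -> msym (mscale c H).
Proof. by move=> h i j; rewrite /mscale h. Qed.
Lemma msym_madd n (A B : mat n) : msym A -> msym B -> msym (madd A B).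
Proof. by move=> h1 h2 i j; rewrite /madd h1 h2. Qed.
Lemma msym_id n : msym (idmat n).
Proof. by move=> i j; rewrite /idmat eq_sym. Qed.

Lemma norm_bound n (H : mat n) K : msym H -> 0 < K ->
  (forall v, Rabs (quad H v) <= K * dot v v) -> forall v, vnorm (mv H v) <= K * vnorm v.
Proof.
move=> Hs HK Hq v.
set w := mv H v.
have pol : forall u, 4 * dot u w <= K * (2 * dot u u + 2 * dot v v).
  move=> u.
  have e1 : quad H (vadd u v) = quad H u + 2 * dot u w + quad H v.
    rewrite /quad mv_add !dot_addl !dot_addr (sym_dot v u Hs) /w; ring.
  have e2 : quad H (vsub u v) = quad H u - 2 * dot u w + quad H v.
    rewrite /quad mv_sub !dot_subl !dot_subr (sym_dot v u Hs) /w; ring.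
  have h1 := Hq (vadd u v); have h2 := Hq (vsub u v).
  have d1 : dot (vadd u v) (vadd u v) = dot u u + 2 * dot u v + dot v v.
    rewrite !dot_addl !dot_addr (dot_comm v u); ring.
  have d2 : dot (vsub u v) (vsub u v) = dot u u - 2 * dot u v + dot v v.
    rewrite !dot_subl !dot_subr (dot_comm v u); ring.
  rewrite e1 d1 in h1; rewrite e2 d2 in h2.
  move: h1 h2; split_Rabs; nra.
have := pol (vscale (/ K) w).
rewrite dot_scalel !dot_scaler dot_scalel => h.
have hww : dot w w <= K * K * dot v v.
  have hk : 0 < / K by apply: Rinv_0_lt_compat.
  have e : dot w w = K * (/ K * dot w w) by field; lra.
  have : 4 * (/ K * dot w w) <= 2 * K * (/ K * (/ K * dot w w)) + 2 * K * dot v v by lra.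
  have e2 : 2 * K * (/ K * (/ K * dot w w)) = 2 * (/ K * dot w w) by field; lra.
  rewrite e2 => h3.
  rewrite e; have : / K * dot w w <= K * dot v v by lra.
  move=> h4; have := Rmult_le_compat_l K _ _ (Rlt_le _ _ HK) h4. lra.
apply: Rsqr_incr_0_var.
- rewrite /Rsqr vnorm_sq. have := vnorm_sq v. nra.
- have := vnorm_ge0 v; nra.
Qed.

Lemma vnorm0 n : vnorm (fun _ : 'I_n => 0) = 0.
Proof. by rewrite /vnorm dot0r sqrt_0. Qed.

Lemma opnorm_props n (H : mat n) K : msym H -> 0 < K ->
  (forall v, Rabs (quad H v) <= K * dot v v) ->
  0 <= opnorm H /\ opnorm H <= K /\ forall v, vnorm (mv H v) <= opnorm H * vnorm v.
Proof.
move=> Hs HK Hq.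
have NB := norm_bound Hs HK Hq.
set E := fun y => exists v : vec n, vnorm v <= 1 /\ y = vnorm (mv H v).
have ub : is_upper_bound E K.
  move=> y [v [hv ->]]; have := NB v; have := vnorm_ge0 v; nra.
have ex : exists m, is_lub E m.
  have z : E (vnorm (mv H (fun _ => 0))).
    exists (fun _ => 0); split=> //; rewrite vnorm0; lra.
  have [m hm] := completeness E (ex_intro _ K ub) (ex_intro _ _ z).
  by exists m.
have hl : is_lub E (opnorm H) by rewrite /opnorm; apply: epsilon_spec.
have h0 : 0 <= opnorm H.
  apply: Rle_trans (vnorm_ge0 (mv H (fun _ => 0))) _.
  apply: (proj1 hl); exists (fun _ => 0); split=> //; rewrite vnorm0; lra.
split=> //; split; first by apply: (proj2 hl).
move=> v.
case: (Req_dec (vnorm v) 0) => hv.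
- have := NB v; rewrite hv; have := vnorm_ge0 (mv H v); nra.
- have hp : 0 < vnorm v by have := vnorm_ge0 v; lra.
  have hE : E (vnorm (mv H (vscale (/ vnorm v) v))).
    exists (vscale (/ vnorm v) v); split=> //.
    rewrite vnorm_scale Rabs_right; last by left; apply: Rinv_0_lt_compat.
    rewrite Rinv_l //; lra.
  have := proj1 hl _ hE.
  rewrite mv_scale vnorm_scale Rabs_right; last by left; apply: Rinv_0_lt_compat.
  move=> h.
  have e : vnorm (mv H v) = vnorm v * (/ vnorm v * vnorm (mv H v)) by field; lra.
  rewrite e Rmult_comm; apply: Rmult_le_compat_r; lra.
Qed.

Lemma vnorm0_eq n (d : vec n) : vnorm d = 0 -> d = (fun _ => 0).
Proof. move=> h; apply: dot_eq0; rewrite -vnorm_sq h; ring. Qed.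

Lemma vadd0 n (x : vec n) : vadd x (fun _ => 0) = x.
Proof. apply: functional_extensionality => i; rewrite /vadd; ring. Qed.

Lemma abs_lo x b : Rabs x <= b -> - b <= x.
Proof. rewrite /Rabs; case: Rcase_abs => h1 h. lra. lra. Qed.
Lemma abs_hi x b : Rabs x <= b -> x <= b.
Proof. rewrite /Rabs; case: Rcase_abs => h1 h. lra. lra. Qed.

Lemma grad_ineq n (f : vec n -> R) g : has_gradient f g -> convex_fun f ->
  forall x d, dot (g x) d <= f (vadd x d) - f x.
Proof.
move=> Hg Hc x d.
case: (Req_dec (vnorm d) 0) => hd.
  rewrite (@vnorm0_eq _ d hd) dot0r vadd0; lra.
have nd : 0 < vnorm d by have := vnorm_ge0 d; lra.
case: (Rle_lt_dec (dot (g x) d) (f (vadd x d) - f x)) => // hlt; exfalso.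
set D := f (vadd x d) - f x in hlt.
set eps := (dot (g x) d - D) / (2 * vnorm d).
have he : 0 < eps by rewrite /eps; apply: Rdiv_lt_0_compat; lra.
have [del [hdel H]] := Hg x eps he.
set t := Rmin 1 (del / (2 * vnorm d)).
have ht0 : 0 < t by apply: Rmin_pos; [lra | apply: Rdiv_lt_0_compat; lra].
have ht1 : t <= 1 by apply: Rmin_l.
have ht2 : t * vnorm d < del.
  have : t <= del / (2 * vnorm d) by apply: Rmin_r.
  move=> h; have e : del = (del / (2 * vnorm d)) * (2 * vnorm d) by field; lra.
  nra.
have := H (vscale t d).
rewrite vnorm_scale Rabs_right; last lra.
have htd : 0 < t * vnorm d by nra.
move=> /(_ (conj htd ht2)).
rewrite dot_scaler.
have hc := Hc (vadd x d) x t (conj (Rlt_le _ _ ht0) ht1).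
have e : vadd (vscale t (vadd x d)) (vscale (1 - t) x) = vadd x (vscale t d).
  apply: functional_extensionality => i; rewrite /vadd /vscale; ring.
rewrite e in hc.
move=> h; have h' := @abs_lo _ _ h.
have : t * dot (g x) d <= t * D + eps * (t * vnorm d) by rewrite /D; lra.
have e2 : eps * (t * vnorm d) = t * ((dot (g x) d - D) / 2) by rewrite /eps; field; lra.
rewrite e2 => h2. nra.
Qed.

Lemma phi_deriv n (f : vec n -> R) g x d : has_gradient f g -> 0 < vnorm d ->
  forall t, derivable_pt_lim (fun t => f (vadd x (vscale t d))) t (dot (g (vadd x (vscale t d))) d).
Proof.
move=> Hg nd t eps he.
set y := vadd x (vscale t d).
have he' : 0 < eps / (2 * vnorm d) by apply: Rdiv_lt_0_compat; lra.
have [del [hdel H]] := Hg y _ he'.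
have hdp : 0 < del / vnorm d by apply: Rdiv_lt_0_compat.
exists (mkposreal _ hdp) => h hh0 hh /=.
have e : vadd x (vscale (t + h) d) = vadd y (vscale h d).
  apply: functional_extensionality => i; rewrite /y /vadd /vscale; ring.
rewrite e.
have hab : 0 < Rabs h by apply: Rabs_pos_lt.
have hn : 0 < vnorm (vscale h d) < del.
  rewrite vnorm_scale; split; first by nra.
  simpl in hh. have ee : del = del / vnorm d * vnorm d by field; lra.
  nra.
have := H _ hn; rewrite dot_scaler vnorm_scale => hb.
have ee : (f (vadd y (vscale h d)) - f y) / h - dot (g y) d
        = (f (vadd y (vscale h d)) - f y - h * dot (g y) d) / h by field.
rewrite ee /Rdiv Rabs_mult Rabs_inv.
apply: (Rmult_lt_reg_r (Rabs h)) => //.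
have e3 : Rabs (f (vadd y (vscale h d)) - f y - h * dot (g y) d) * / Rabs h * Rabs h
          = Rabs (f (vadd y (vscale h d)) - f y - h * dot (g y) d) by field; lra.
rewrite e3.
have e4 : eps / (2 * vnorm d) * (Rabs h * vnorm d) = eps * Rabs h / 2 by field; lra.
rewrite e4 in hb. nra.
Qed.

Lemma descent n (f : vec n -> R) g L : has_gradient f g -> lipschitz L g -> 0 < L ->
  forall x d, f (vadd x d) <= f x + dot (g x) d + L / 2 * dot d d.
Proof.
move=> Hg HL hL x d.
case: (Req_dec (vnorm d) 0) => hd.
  rewrite (@vnorm0_eq _ d hd) !dot0r vadd0; lra.
have nd : 0 < vnorm d by have := vnorm_ge0 d; lra.
set c := dot (g x) d; set s := dot d d.
set phi := fun t => f (vadd x (vscale t d)).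
set psi := fun t => phi t - (t * c + L * s / 2 * (t * t)).
set psi' := fun t => dot (g (vadd x (vscale t d))) d - (1 * c + L * s / 2 * (1 * t + t * 1)).
have D : forall t, 0 <= t <= 1 -> derivable_pt_lim psi t (psi' t).
  move=> t _; rewrite /psi /psi'.
  apply: (derivable_pt_lim_minus phi (fun t => t * c + L * s / 2 * (t * t))).
  - exact: phi_deriv.
  - apply: (derivable_pt_lim_plus (fun t => t * c) (fun t => L * s / 2 * (t * t))).
    + have := @derivable_pt_lim_scal_right id t 1 c (derivable_pt_lim_id t). by [].
    + apply: (derivable_pt_lim_scal (fun t => t * t)).
      have := @derivable_pt_lim_mult id id t 1 1 (derivable_pt_lim_id t) (derivable_pt_lim_id t).
      by [].
have [t0 [ht0 ht0']] := MVT_cor2 psi psi' 0 1 Rlt_0_1 D.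
have hneg : psi' t0 <= 0.
  rewrite /psi'.
  have hcs := CS (vsub (g (vadd x (vscale t0 d))) (g x)) d.
  rewrite dot_subl in hcs.
  have hl := HL (vadd x (vscale t0 d)) x.
  have ee : vsub (vadd x (vscale t0 d)) x = vscale t0 d.
    apply: functional_extensionality => i; rewrite /vsub /vadd /vscale; ring.
  rewrite ee vnorm_scale Rabs_right in hl; last lra.
  have := vnorm_sq d; rewrite -/s => hs.
  have hv := vnorm_ge0 (vsub (g (vadd x (vscale t0 d))) (g x)).
  rewrite -/c in hcs.
  nra.
have e1 : psi 1 = f (vadd x d) - (c + L * s / 2).
  rewrite /psi /phi.
  have -> : vscale 1 d = d by apply: functional_extensionality => i; rewrite /vscale; ring.
  ring.
have e0 : psi 0 = f x.
  rewrite /psi /phi.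
  have -> : vadd x (vscale 0 d) = x by apply: functional_extensionality => i; rewrite /vadd /vscale; ring.
  ring.
rewrite e1 e0 in ht0. nra.
Qed.

Lemma key_bound (eta Qs Qd c s : R) : 0 <= eta < 1 -> 0 < c -> 0 <= s -> Qs <= 0 ->
  Qd <= (1 - eta) * Qs ->
  (forall lam, 0 <= lam <= 1 -> Qs <= lam * Qd - / 2 * (lam * (1 - lam)) * (c * s)) ->
  c * (1 - sqrt eta) * s <= 2 * (- Qd) * (1 + sqrt eta).
Proof.
move=> He Hc Hs HQs HQd Hl.
set r := sqrt eta.
have hr0 : 0 <= r by apply: sqrt_pos.
have hrr : r * r = eta by rewrite /r sqrt_sqrt; lra.
have hr1 : r < 1.
  case: (Rlt_le_dec r 1) => // h; nra.
case: (Req_dec r 0) => hr.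
- rewrite hr in hrr; rewrite hr.
  have e0 : eta = 0 by lra.
  rewrite e0 in HQd.
  case: (Rle_lt_dec (c * s) (2 * - Qd)) => h; first lra.
  exfalso.
  have hcs : 0 < c * s by lra.
  have hcs' : c * s <> 0 by lra.
  set lam := (2 * - Qd / (c * s) + 1) / 2.
  have hq : 0 <= - Qd by nra.
  have hl0 : 0 <= 2 * - Qd / (c * s) by apply: Rmult_le_pos; [lra | left; apply: Rinv_0_lt_compat; lra].
  have hl1 : 2 * - Qd / (c * s) < 1.
    apply: (Rmult_lt_reg_r (c * s)) => //.
    have -> : 2 * - Qd / (c * s) * (c * s) = 2 * - Qd by field; split; nra.
    lra.
  have hlam : 0 <= lam <= 1 by rewrite /lam; lra.
  have := Hl lam hlam.
  have e : lam * (c * s) = (2 * - Qd + c * s) / 2 by rewrite /lam; field; split; nra.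
  have hlam1 : 0 < 1 - lam by rewrite /lam; lra.
  move=> h2.
  have h3 : / 2 * (lam * (1 - lam)) * (c * s) <= (1 - lam) * - Qd by nra.
  have h4 : / 2 * (1 - lam) * (lam * (c * s)) <= (1 - lam) * - Qd by nra.
  rewrite e in h4.
  have h5 : / 2 * ((2 * - Qd + c * s) / 2) <= - Qd.
    apply: (Rmult_le_reg_l (1 - lam)) => //. nra.
  lra.
- have hrp : 0 < r by lra.
  set lam := / (1 + r).
  have hl : 0 <= lam <= 1.
    rewrite /lam; split; first by left; apply: Rinv_0_lt_compat; lra.
    rewrite -Rinv_1; apply: Rinv_le_contravar; lra.
  have h1 := Hl lam hl.
  have e1 : 1 - lam = r * lam by rewrite /lam; field; lra.
  rewrite e1 in h1.
  have hQs : Qd / (1 - eta) <= Qs.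
    apply: (Rmult_le_reg_l (1 - eta)); first lra.
    have -> : (1 - eta) * (Qd / (1 - eta)) = Qd by field; lra. lra.
  have h2 : Qd / (1 - eta) <= lam * Qd - / 2 * (lam * (r * lam)) * (c * s) by lra.
  rewrite -hrr in h2.
  have e2 : Qd / (1 - r * r) = lam * (Qd / (1 - r)) by rewrite /lam; field; lra.
  rewrite e2 in h2.
  have hlp : 0 < lam by rewrite /lam; apply: Rinv_0_lt_compat; lra.
  have h3 : Qd / (1 - r) <= Qd - / 2 * (r * lam) * (c * s).
    apply: (Rmult_le_reg_l lam) => //. lra.
  have e3 : Qd / (1 - r) - Qd = Qd * r / (1 - r) by field; lra.
  have h4 : / 2 * (r * lam) * (c * s) <= - (Qd * r / (1 - r)) by lra.
  have e4 : / 2 * (r * lam) * (c * s) = r * (c * s / (2 * (1 + r))) by rewrite /lam; field; lra.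
  have e5 : - (Qd * r / (1 - r)) = r * (- Qd / (1 - r)) by field; lra.
  rewrite e4 e5 in h4.
  have h5 : c * s / (2 * (1 + r)) <= - Qd / (1 - r).
    apply: (Rmult_le_reg_l r) => //.
  have e6 : c * (1 - r) * s = (c * s / (2 * (1 + r))) * (2 * (1 + r) * (1 - r)) by field; lra.
  have e7 : 2 * - Qd * (1 + r) = (- Qd / (1 - r)) * (2 * (1 + r) * (1 - r)) by field; lra.
  rewrite e6 e7; apply: Rmult_le_compat_r => //; nra.
Qed.

Definition thr (L gamma eta : R) := L * (1 + sqrt eta) / (2 - gamma * (1 - sqrt eta)).

Lemma den_pos gamma eta : 0 < gamma <= 1 -> 0 <= eta < 1 -> 1 <= 2 - gamma * (1 - sqrt eta).
Proof.
move=> hg he.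
have h0 : 0 <= sqrt eta by apply: sqrt_pos.
have h1 : sqrt eta < 1.
  have : sqrt eta * sqrt eta = eta by rewrite sqrt_sqrt; lra.
  case: (Rlt_le_dec (sqrt eta) 1) => // h; nra.
nra.
Qed.

Lemma vsc_comb n (x d : vec n) lam :
  vadd (vscale lam (vadd x d)) (vscale (1 - lam) x) = vadd x (vscale lam d).
Proof. apply: functional_extensionality => i; rewrite /vadd /vscale; ring. Qed.

Lemma accept_lem n (f : vec n -> R) g L dom psi gamma eta c (H : mat n) x d :
  has_gradient f g -> lipschitz L g -> 0 < L -> convex_ext dom psi ->
  0 <= eta < 1 -> 0 < gamma <= 1 -> 0 < c -> thr L gamma eta <= c ->
  (forall v, c * dot v v <= quad H v) -> dom x ->
  eta_inexact dom g psi eta x H d -> accepted f g psi gamma x H d.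
Proof.
move=> Hg HL hL Hcv He Hgm hc hthr Hq Hx [hd [Qs [[Hlow Hglb] HQ]]].
set Qd := Qmodel g psi x H d in HQ *.
have HQs0 : Qs <= 0.
  apply: Hlow; exists (fun _ => 0); rewrite vadd0; split=> //.
  rewrite /Qmodel vadd0 dot0r /quad dot_comm dot0r; ring.
have Hl : forall lam, 0 <= lam <= 1 ->
    Qs <= lam * Qd - / 2 * (lam * (1 - lam)) * (c * dot d d).
  move=> lam hl.
  have [hz hpz] := Hcv (vadd x d) x lam hd Hx hl.
  rewrite vsc_comb in hz hpz.
  have := Hlow (Qmodel g psi x H (vscale lam d)) (ex_intro _ _ (conj hz erefl)).
  rewrite /Qd /Qmodel quad_scale dot_scaler.
  have := Hq d. have : 0 <= lam * (1 - lam) by nra.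
  nra.
have hs := dot_ge0 d.
have KB := key_bound He hc hs HQs0 HQ Hl.
have Hdesc := descent Hg HL hL x d.
have hqd := Hq d.
have hden := den_pos Hgm He.
have hsq : 0 <= sqrt eta by apply: sqrt_pos.
have h2 : L * (1 + sqrt eta) <= c * (2 - gamma * (1 - sqrt eta)).
  rewrite /thr in hthr.
  have e : L * (1 + sqrt eta) = L * (1 + sqrt eta) / (2 - gamma * (1 - sqrt eta)) * (2 - gamma * (1 - sqrt eta)) by field; lra.
  rewrite e; apply: Rmult_le_compat_r; lra.
have h3 : (L - c) * (1 + sqrt eta) <= (1 - gamma) * c * (1 - sqrt eta) by nra.
have h4 : (L - c) * dot d d * (1 + sqrt eta) <= (1 - gamma) * (2 * - Qd * (1 + sqrt eta)).
  have : (L - c) * (1 + sqrt eta) * dot d d <= (1 - gamma) * c * (1 - sqrt eta) * dot d d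
    by apply: Rmult_le_compat_r.
  have : 0 <= 1 - gamma by lra.
  nra.
have h5 : (L - c) * dot d d <= (1 - gamma) * (2 * - Qd).
  apply: (Rmult_le_reg_r (1 + sqrt eta)); first lra. lra.
have hQd0 : Qd <= 0 by nra.
rewrite /accepted -/Qd; split; last by nra.
move: Hdesc; rewrite /Qd /Qmodel in h5 hQd0 *; nra.
Qed.

Definition lo (var : variant) beta m (i : nat) : R :=
  match var with
  | Variant1 => / beta ^ i * m
  | Variant2 => match i with O => m | S j => m + / beta ^ j end
  end.

Lemma ibpos beta j : 0 < beta -> 0 < / beta ^ j.
Proof. move=> h; apply: Rinv_0_lt_compat; apply: pow_lt; done. Qed.

Lemma trial_props n var beta m0 M0 (H0 : mat n) i : 0 < beta -> msym H0 ->
  loewner_le (mscale m0 (idmat n)) H0 -> loewner_le H0 (mscale M0 (idmat n)) ->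
  msym (trial_mat var beta H0 i) /\ forall v,
    lo var beta m0 i * dot v v <= quad (trial_mat var beta H0 i) v <= lo var beta M0 i * dot v v.
Proof.
move=> hb hs hlo hhi.
have hl : forall v, m0 * dot v v <= quad H0 v.
  by move=> v; have := hlo v; rewrite quad_mscale quad_id.
have hh : forall v, quad H0 v <= M0 * dot v v.
  by move=> v; have := hhi v; rewrite quad_mscale quad_id.
case: var => /=.
- split; first by apply: msym_mscale.
  move=> v; rewrite quad_mscale.
  have := ibpos i hb; have := hl v; have := hh v; split; nra.
- case: i => [|j] /=.
  + split; first done.
    move=> v; split; [apply: hl | apply: hh].
  + split; first by apply: msym_madd => //; apply: msym_mscale; apply: msym_id.
    move=> v; rewrite quad_madd quad_mscale quad_id.
    have := hl v; have := hh v; split; nra.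
Qed.

Lemma lo_pos var beta M0 i : 0 < beta -> 0 < M0 -> 0 < lo var beta M0 i.
Proof.
move=> hb hM; have := ibpos i hb; case: var => /=; first nra.
case: i => [|j] //= _; have := ibpos j hb; lra.
Qed.

Lemma quad_absK n (H : mat n) a b : (forall v, a * dot v v <= quad H v <= b * dot v v) ->
  forall v, Rabs (quad H v) <= Rmax (Rabs a) (Rabs b) * dot v v.
Proof.
move=> h v; have [h1 h2] := h v; have hs := dot_ge0 v.
have ha := Rmax_l (Rabs a) (Rabs b); have hb := Rmax_r (Rabs a) (Rabs b).
have hla := @abs_lo a (Rabs a) (Rle_refl _).
have hlb := Rle_abs b.
apply: Rabs_le; split; nra.
Qed.

Lemma rate_mono g m e N M : 0 < g -> 0 < m -> 0 <= e < 1 -> 0 <= N -> N <= M ->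
  1 - g * (m * (1 - e) / (m + N)) <= 1 - g * (m * (1 - e) / (m + M)).
Proof.
move=> hg hm he hN hNM.
have : / (m + M) <= / (m + N) by apply: Rinv_le_contravar; lra.
rewrite /Rdiv => h.
have hA : 0 <= m * (1 - e) by nra.
have := Rmult_le_compat_l _ _ _ hA h.
have := Rmult_le_compat_l g _ _ (Rlt_le _ _ hg) (Rmult_le_compat_l _ _ _ hA h).
lra.
Qed.

Lemma inv_pow_S beta j : 0 < beta -> / beta ^ S j = / beta * / beta ^ j.
Proof. move=> hb; rewrite /= Rinv_mult //. Qed.

Lemma pow_le1 beta j : 0 < beta < 1 -> beta ^ j <= 1.
Proof. move=> hb; elim: j => [|j IH] /=; first lra. have := pow_lt beta j (proj1 hb). nra. Qed.

Lemma inv_pow_ge1 beta j : 0 < beta < 1 -> 1 <= / beta ^ j.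
Proof.
move=> hb; rewrite -Rinv_1; apply: Rinv_le_contravar; first by apply: pow_lt; lra.
exact: pow_le1.
Qed.

Lemma Rmax_abs_le a b K : -K <= a -> a <= K -> -K <= b -> b <= K -> Rmax (Rabs a) (Rabs b) <= K.
Proof. move=> *; apply: Rmax_lub; apply: Rabs_le; lra. Qed.

Lemma V1K beta m0 M0 T X nb : 0 < beta < 1 -> 0 < m0 -> m0 <= M0 -> 0 < T -> X = T / (beta * m0) ->
  (forall i, (i < nb)%nat -> lo Variant1 beta m0 i < T) ->
  Rmax (Rabs (lo Variant1 beta m0 nb)) (Rabs (lo Variant1 beta M0 nb)) <= M0 * Rmax 1 X.
Proof.
move=> hb hm hmM hT hX hf.
have hR := Rmax_l 1 X.
case: nb hf => [|j] hf /=.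
- rewrite Rinv_1 !Rmult_1_l; apply: Rmax_abs_le; nra.
- have := hf j (ltnSn j); rewrite /= => hj.
  have ha := ibpos j (proj1 hb).
  rewrite Rinv_mult.
  have hbi : 0 < / beta by apply: Rinv_0_lt_compat; lra.
  have hX' : / beta * / beta ^ j <= X.
    rewrite hX.
    have e : T / (beta * m0) = / beta * (T / m0) by field; lra.
    rewrite e; apply: Rmult_le_compat_l; first lra.
    have hbj : beta ^ j <> 0 by apply: pow_nonzero; lra.
    have e2 : / beta ^ j = / beta ^ j * m0 / m0 by field; lra.
    rewrite e2; apply: Rmult_le_compat_r; [left; apply: Rinv_0_lt_compat|]; lra.
  have hRX := Rmax_r 1 X.
  have hp : 0 < / beta * / beta ^ j by nra.
  apply: Rmax_abs_le; nra.
Qed.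

Lemma V2K beta m0 M0 T nb : 0 < beta < 1 -> 0 < M0 -> m0 <= M0 -> 0 < T ->
  (forall i, (i < nb)%nat -> lo Variant2 beta m0 i < T) ->
  Rmax (Rabs (lo Variant2 beta m0 nb)) (Rabs (lo Variant2 beta M0 nb)) <= M0 + Rmax 1 (/ beta * (T - m0)).
Proof.
move=> hb hM hmM hT hf.
have hR1 := Rmax_l 1 (/ beta * (T - m0)).
have hR2 := Rmax_r 1 (/ beta * (T - m0)).
have hbi : 1 < / beta by rewrite -Rinv_1; apply: Rinv_lt_contravar; lra.
case: nb hf => [|[|j]] hf /=.
- apply: Rmax_abs_le; try lra.
  case: (Rle_lt_dec (- M0) m0) => h; first lra.
  have : / beta * (T - m0) >= T - m0 by nra. lra.
- rewrite Rinv_1; apply: Rmax_abs_le; try lra.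
  case: (Rle_lt_dec (- M0 - 1) m0) => h; first lra.
  have : / beta * (T - m0) >= T - m0 by nra. lra.
- have := hf j.+1 (ltnSn _); rewrite /= => hj.
  have ha := inv_pow_ge1 j hb.
  rewrite Rinv_mult.
  have e : / beta * / beta ^ j < / beta * (T - m0) by apply: Rmult_lt_compat_l; lra.
  have : / beta * (T - m0) >= T - m0 by nra.
  have : 0 < / beta * / beta ^ j by nra.
  move=> *; apply: Rmax_abs_le; lra.
Qed.

Unset Implicit Arguments.

Theorem theorem3
  (n : nat) (f : vec n -> R) (gradf : vec n -> vec n) (L : R)
  (dom : vec n -> Prop) (psi : vec n -> R)
  (Fstar : R) (P : vec n -> vec n) (mu : R)
  (var : variant) (beta gamma eta m0 M0 : R)
  (H0 : nat -> mat n) (x : nat -> vec n)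
  (nb : nat -> nat) (D : nat -> nat -> vec n)
  (* Assumption 1 *)
  (HL : 0 < L) (Hgrad : has_gradient f gradf) (HLip : lipschitz L gradf)
  (Hpsi_conv : convex_ext dom psi) (Hpsi_prop : proper_ext dom)
  (Hpsi_closed : closed_ext dom psi)
  (Hbdd : exists b, forall z, dom z -> b <= f z + psi z)
  (HFstar : is_inf (fun y => exists z, dom z /\ y = f z + psi z) Fstar)
  (HOmega : exists z, dom z /\ f z + psi z = Fstar)
  (* P is the Euclidean projection onto Omega = {z | F z = F^*} *)
  (HP : forall z, (dom (P z) /\ f (P z) + psi (P z) = Fstar) /\
          forall y, dom y -> f y + psi y = Fstar -> vnorm (vsub z (P z)) <= vnorm (vsub z y))
  (* f convex, F mu-optimal-set-strongly convex with mu > 0 *)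
  (Hfconv : convex_fun f)
  (Hmu : 0 < mu)
  (Hosc : forall z lam, dom z -> 0 <= lam <= 1 ->
      let w := vadd (vscale lam z) (vscale (1 - lam) (P z)) in
      dom w /\
      f w + psi w <= lam * (f z + psi z) + (1 - lam) * Fstar
                     - mu * lam * (1 - lam) / 2 * (vnorm (vsub z (P z))) ^ 2)
  (* algorithm parameters *)
  (Hbeta : 0 < beta < 1) (Hgamma : 0 < gamma <= 1) (Heta : 0 <= eta < 1)
  (* initial matrices *)
  (HM0 : 0 < M0) (Hm0M0 : m0 <= M0)
  (Hm0pos : var = Variant1 -> 0 < m0)
  (HH0sym : forall k, msym (H0 k))
  (HH0pd : forall k, var = Variant1 -> pd (H0 k))
  (HH0low : forall k, loewner_le (mscale m0 (idmat n)) (H0 k))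
  (HH0up : forall k, loewner_le (H0 k) (mscale M0 (idmat n)))
  (* trace of Algorithm 2: at iteration k, trials i = 0..nb k with directions D k i *)
  (Hx0 : dom (x 0%nat))
  (Hinex : forall k i, (i <= nb k)%nat ->
      eta_inexact dom gradf psi eta (x k) (trial_mat var beta (H0 k) i) (D k i))
  (Hfail : forall k i, (i < nb k)%nat ->
      ~ accepted f gradf psi gamma (x k) (trial_mat var beta (H0 k) i) (D k i))
  (Hacc : forall k,
      accepted f gradf psi gamma (x k) (trial_mat var beta (H0 k) (nb k)) (D k (nb k)))
  (Hstep : forall k, x (S k) = vadd (x k) (D k (nb k))) :
  forall k : nat,
    let Hk := trial_mat var beta (H0 k) (nb k) in
    let Fk := f (x k) + psi (x k) in
    let Fk1 := f (x (S k)) + psi (x (S k)) in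
    let rate := 1 - gamma * (mu * (1 - eta) / (mu + opnorm Hk)) in
    Fk1 - Fstar <= rate * (Fk - Fstar)
    /\ (var = Variant1 ->
          rate <= 1 - gamma * (mu * (1 - eta) / (mu + Mtilde1 M0 m0 L beta gamma eta)))
    /\ (var = Variant2 ->
          rate <= 1 - gamma * (mu * (1 - eta) / (mu + Mtilde2 M0 m0 L beta gamma eta)))
    /\ (Fk - Fstar >= quad Hk (vsub (x k) (P (x k))) -> psd Hk ->
          Fk1 - Fstar <= (1 - (1 - eta) * gamma / 2) * (Fk - Fstar)).
Proof.
move=> k; cbv zeta.
have Hdom : forall j, dom (x j).
  elim=> [|j IH]; first done.
  rewrite Hstep; exact: (proj1 (Hinex j (nb j) (leqnn _))).
have hb0 : 0 < beta by lra.
set T := thr L gamma eta.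
have hden := den_pos Hgamma Heta.
have hsq : 0 <= sqrt eta by apply: sqrt_pos.
have hT : 0 < T.
  rewrite /T /thr; apply: Rdiv_lt_0_compat; nra.
have Hfl : forall i, (i < nb k)%nat -> lo var beta m0 i < T.
  move=> i hi.
  case: (Rlt_le_dec (lo var beta m0 i) T) => // hge; exfalso.
  have [_ hq] := trial_props var i hb0 (HH0sym k) (HH0low k) (HH0up k).
  apply: (Hfail k i hi).
  apply: (@accept_lem n f gradf L dom psi gamma eta (lo var beta m0 i) _ (x k) (D k i)) => //; try lra.
  - by move=> v; case: (hq v).
  - exact: (Hinex k i (ltnW hi)).
set Hk := trial_mat var beta (H0 k) (nb k).
have [HkS HkQ] := trial_props var (nb k) hb0 (HH0sym k) (HH0low k) (HH0up k).
set K := Rmax (Rabs (lo var beta m0 (nb k))) (Rabs (lo var beta M0 (nb k))).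
have hKpos : 0 < K.
  have := lo_pos var (nb k) hb0 HM0.
  have := Rmax_r (Rabs (lo var beta m0 (nb k))) (Rabs (lo var beta M0 (nb k))).
  have := Rle_abs (lo var beta M0 (nb k)). rewrite -/K. lra.
have [hN0 [hNK hNv]] := opnorm_props HkS hKpos (quad_absK HkQ).
set N := opnorm Hk.
rewrite -/Hk -/N in hN0 hNK hNv.
set z := x k.
set Fk := f z + psi z.
have hz := Hdom k.
have [[hPd hPF] _] := HP z.
set p := P z.
set e := vsub p z.
have [hdk [Qs [[Hlow _] HQ]]] := Hinex k (nb k) (leqnn _).
have [hacc _] := Hacc k.
rewrite -/Hk in HQ hacc.
set Qd := Qmodel gradf psi z Hk (D k (nb k)) in HQ hacc.
have HF1 : f (x k.+1) + psi (x k.+1) = f (vadd z (D k (nb k))) + psi (vadd z (D k (nb k))) by rewrite Hstep.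
rewrite HF1.
have hFst : Fstar <= Fk.
  by apply: (proj1 HFstar); exists z; split.
have hee : vnorm (vsub z p) ^ 2 = dot e e.
  rewrite /= Rmult_1_r vnorm_sq /e.
  rewrite !dot_subl !dot_subr (dot_comm p z); ring.
have hquadN : forall v, quad Hk v <= N * dot v v.
  move=> v; have h1 := CS v (mv Hk v); have h2 := hNv v; have h3 := vnorm_ge0 v.
  have h4 := vnorm_sq v. rewrite /quad.
  have h5 := Rmult_le_compat_l _ _ _ h3 h2.
  rewrite -h4. lra.
have hgeta : 0 <= gamma * (1 - eta) by nra.
split.
{
  set lam := mu / (mu + N).
  have hlam0 : 0 < lam by apply: Rdiv_lt_0_compat; lra.
  have hlam1 : lam <= 1.
    rewrite /lam; apply: (Rmult_le_reg_r (mu + N)); first lra.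
    have -> : mu / (mu + N) * (mu + N) = mu by field; lra. lra.
  have hl01 : 0 <= 1 - lam <= 1 by lra.
  have [hw hFw] := Hosc z (1 - lam) hz hl01.
  have ew : vadd (vscale (1 - lam) z) (vscale (1 - (1 - lam)) p) = vadd z (vscale lam e).
    apply: functional_extensionality => i; rewrite /vadd /vscale /e /vsub; ring.
  rewrite ew in hw hFw. rewrite hee in hFw.
  have hQ := Hlow _ (ex_intro _ (vscale lam e) (conj hw erefl)).
  have hgi := grad_ineq Hgrad Hfconv z (vscale lam e).
  have hqn := hquadN (vscale lam e).
  rewrite quad_scale dot_scalel dot_scaler in hqn.
  rewrite /Qmodel quad_scale in hQ.
  have hQs : Qs <= - lam * (Fk - Fstar).
    have hl : lam * (mu + N) = mu by rewrite /lam; field; lra.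
    rewrite -/z -/Hk in hQ.
    have e1 : N * (lam * (lam * dot e e)) = lam * (mu - lam * mu) * dot e e.
      have : lam * N = mu - lam * mu by lra.
      move=> h; rewrite -h; ring.
    rewrite /Fk. lra.
  have hr : (1 - gamma * (mu * (1 - eta) / (mu + N))) * (Fk - Fstar)
          = (Fk - Fstar) - gamma * (1 - eta) * lam * (Fk - Fstar) by rewrite /lam; field; lra.
  rewrite hr.
  have : Qd <= (1 - eta) * (- lam * (Fk - Fstar)).
    apply: Rle_trans HQ _; apply: Rmult_le_compat_l; lra.
  move=> hh; have := Rmult_le_compat_l gamma _ _ (ltac:(lra)) hh.
  move: hacc; rewrite -/z /Fk. lra. }
split.
{ move=> hv.
  apply: rate_mono => //; try lra.
  apply: Rle_trans hNK _.
  rewrite /K; move: Hfl; rewrite hv => Hfl.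
  apply: (V1K (T := T)) => //; try lra.
  - by apply: Hm0pos.
  - rewrite /T /thr; field; split; [lra | split; [ have := Hm0pos hv; lra | lra]]. }
split.
{ move=> hv.
  apply: rate_mono => //; try lra.
  apply: Rle_trans hNK _.
  rewrite /K; move: Hfl; rewrite hv => Hfl.
  exact: (V2K (T := T)). }
{ move=> hge _.
  have ep : vadd z e = p by apply: functional_extensionality => i; rewrite /vadd /e /vsub; ring.
  have hde : dom (vadd z e) by rewrite ep.
  have hQ := Hlow (Qmodel gradf psi z Hk e) (ex_intro _ e (conj hde erefl)).
  have hgi := grad_ineq Hgrad Hfconv z e.
  rewrite ep in hgi.
  have eq : e = vscale (-1) (vsub z p) by apply: functional_extensionality => i; rewrite /vscale /e /vsub; ring.
  have hq : quad Hk e = quad Hk (vsub z p) by rewrite eq quad_scale; ring.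
  rewrite /Qmodel ep hq in hQ.
  rewrite -/p in hPF.
  have hQs : Qs <= - (Fk - Fstar) / 2 by rewrite /Fk in hge *; lra.
  have : Qd <= (1 - eta) * (- (Fk - Fstar) / 2).
    apply: Rle_trans HQ _; apply: Rmult_le_compat_l; lra.
  move=> hh; have := Rmult_le_compat_l gamma _ _ (ltac:(lra)) hh.
  move: hacc; rewrite -/z /Fk. lra. }
Qed.
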